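(* For $j=1,\dots,J$ let $X_j\in\mathbb{R}^{n_j\times m}$ have reduced singular value decomposition $X_j=P_j\Sigma_jQ_j^T$, where $P_j\in\mathbb{R}^{n_j\times r_j}$ and $Q_j\in\mathbb{R}^{m\times r_j}$ have orthonormal columns and $\Sigma_j\in\mathbb{R}^{r_j\times r_j}$ is diagonal with positive diagonal entries. Set $A_j=P_j^T\in\mathbb{R}^{r_j\times n_j}$ and $B_j=-\Sigma_j^{-1}Q_j^T\in\mathbb{R}^{r_j\times m}$, and fix a positive integer $\ell$. Consider the problem $$\min_{W_1,\dots,W_J,Z}\ \sum_{j=1}^J\|W_j\|_1\quad\text{s.t.}\quad A_jW_j+B_jZ=0\ (j=1,\dots,J),\qquad Z^TZ=I_\ell,$$ over $W_j\in\mathbb{R}^{n_j\times\ell}$, $Z\in\mathbb{R}^{m\times\ell}$. Let $(W_1^*,\dots,W_J^*,Z^* )$ be a local minimizer of this problem. Then there exist matrices $\Lambda^*_{1,j}\in\mathbb{R}^{r_j\times\ell}$ ($j=1,\dots,J$) and $\Lambda^*_2\in\mathbb{R}^{\ell\times\ell}$ such that for each $j=1,\dots,J$: $$A_j^T\Lambda^*_{1,j}\in\partial\|W_j^*\|_1,\qquad \sum_{j=1}^J B_j^T\Lambda^*_{1,j}+Z^*\Lambda^*_2=0,\qquad A_jW_j^*+B_jZ^*=0,\qquad (Z^* )^TZ^*=I_\ell.$$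
   Context: For a matrix $W$, $\|W\|_1$ denotes the sum of the $\ell_1$ norms of its columns, i.e. the sum of the absolute values of all its entries. $\partial\|W\|_1$ denotes the (convex) subdifferential of the function $\|\cdot\|_1$ at $W$, with matrices paired via the trace inner product $\langle U,V\rangle=\mathrm{Trace}(U^TV)$. *)

(* Defs.v *)
From HB Require Import structures.
From mathcomp Require Import all_boot all_order all_algebra.
From mathcomp Require Import reals.
Set Implicit Arguments. Unset Strict Implicit. Unset Printing Implicit Defensive.
Import Order.TTheory GRing.Theory Num.Theory.
Local Open Scope ring_scope.

Section Defs.
Variable R : realType.

Definition l1norm (p q : nat) (W : 'M[R]_(p, q)) : R :=
  \sum_(i < p) \sum_(k < q) `|W i k|.

Definition subdiff (p q : nat) (f : 'M[R]_(p, q) -> R) (W : 'M[R]_(p, q))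
  (G : 'M[R]_(p, q)) : Prop :=
  forall V : 'M[R]_(p, q), f W + \tr (G^T *m (V - W)) <= f V.

Definition feasible (J m l : nat) (n r : 'I_J -> nat)
  (A : forall j, 'M[R]_(r j, n j)) (B : forall j, 'M[R]_(r j, m))
  (W : forall j, 'M[R]_(n j, l)) (Z : 'M[R]_(m, l)) : Prop :=
  (forall j, A j *m W j + B j *m Z = 0) /\ Z^T *m Z = 1%:M.

Definition objective (J l : nat) (n : 'I_J -> nat)
  (W : forall j, 'M[R]_(n j, l)) : R :=
  \sum_(j < J) l1norm (W j).

(* local minimizer: feasible, and optimal among feasible points in some
   neighbourhood (entrywise distance < eps, equivalent to any norm topology) *)
Definition local_minimizer (J m l : nat) (n r : 'I_J -> nat)
  (A : forall j, 'M[R]_(r j, n j)) (B : forall j, 'M[R]_(r j, m))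
  (Ws : forall j, 'M[R]_(n j, l)) (Zs : 'M[R]_(m, l)) : Prop :=
  feasible A B Ws Zs /\
  exists eps : R, 0 < eps /\
    forall (W : forall j, 'M[R]_(n j, l)) (Z : 'M[R]_(m, l)),
      feasible A B W Z ->
      (forall j i k, `|W j i k - Ws j i k| < eps) ->
      (forall i k, `|Z i k - Zs i k| < eps) ->
      objective Ws <= objective W.

End Defs.

(* Main.v *)
Require Import Defs.
From HB Require Import structures.
From mathcomp Require Import all_boot all_order all_algebra.
From mathcomp Require Import reals.
From mathcomp Require Import all_classical all_reals all_analysis.
From mathcomp Require Import ring lra.
Import Order.TTheory GRing.Theory Num.Theory.
Import numFieldNormedType.Exports.
Local Open Scope ring_scope.

Set Implicit Arguments. Unset Strict Implicit. Unset Printing Implicit Defensive.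

Section IP.
Variable R : realFieldType.

Lemma trD (p q : nat) (A B : 'M[R]_(p, q)) : (A + B)^T = A^T + B^T.
Proof. by apply/matrixP => i j; rewrite !mxE. Qed.
Lemma trB (p q : nat) (A B : 'M[R]_(p, q)) : (A - B)^T = A^T - B^T.
Proof. by apply/matrixP => i j; rewrite !mxE. Qed.
Lemma trN (p q : nat) (A : 'M[R]_(p, q)) : (- A)^T = - A^T.
Proof. by apply/matrixP => i j; rewrite !mxE. Qed.
Lemma trZ (p q : nat) a (A : 'M[R]_(p, q)) : (a *: A)^T = a *: A^T.
Proof. by apply/matrixP => i j; rewrite !mxE. Qed.

Lemma ipE (p q : nat) (A B : 'M[R]_(p, q)) :
  \tr (A^T *m B) = \sum_i \sum_k A i k * B i k.
Proof.
rewrite /mxtrace exchange_big /=; apply: eq_bigr => k _.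
by rewrite !mxE; apply: eq_bigr => i _; rewrite !mxE.
Qed.

Lemma ip_ge0 (p q : nat) (A : 'M[R]_(p, q)) : 0 <= \tr (A^T *m A).
Proof. by rewrite ipE; apply: sumr_ge0 => i _; apply: sumr_ge0 => k _; by rewrite -expr2 sqr_ge0. Qed.

Lemma ip_entry (p q : nat) (A : 'M[R]_(p, q)) i k : A i k ^+ 2 <= \tr (A^T *m A).
Proof.
rewrite ipE (bigD1 i) //= (bigD1 k) //= -expr2 -addrA lerDl.
apply: addr_ge0; first by apply: sumr_ge0 => k' _; by rewrite -expr2 sqr_ge0.
by apply: sumr_ge0 => i' _; apply: sumr_ge0 => k' _; by rewrite -expr2 sqr_ge0.
Qed.

Lemma ip_eq0 (p q : nat) (A : 'M[R]_(p, q)) : \tr (A^T *m A) = 0 -> A = 0.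
Proof.
move=> h; apply/matrixP => i k; rewrite mxE.
have := ip_entry A i k; rewrite h => h2.
have : A i k ^+ 2 = 0 by apply/eqP; rewrite eq_le h2 sqr_ge0.
by move/eqP; rewrite sqrf_eq0 => /eqP.
Qed.

Lemma ip_sym (p q : nat) (A B : 'M[R]_(p, q)) : \tr (A^T *m B) = \tr (B^T *m A).
Proof. by rewrite -mxtrace_tr trmx_mul trmxK. Qed.

Lemma ip_le (p q : nat) (A B : 'M[R]_(p, q)) :
  2 * \tr (A^T *m B) <= \tr (A^T *m A) + \tr (B^T *m B).
Proof.
rewrite !ipE -big_split mulr_sumr /=; apply: ler_sum => i _.
rewrite -big_split mulr_sumr /=; apply: ler_sum => k _.
have := sqr_ge0 (A i k - B i k); rewrite sqrrB; lra.
Qed.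

Lemma tr_skew (n : nat) (A : 'M[R]_n) (V : 'M[R]_(n, n)) :
  A^T = - A -> \tr (V^T *m A *m V) = 0.
Proof. Abort.

Lemma tr_skew (n p : nat) (A : 'M[R]_n) (V : 'M[R]_(n, p)) :
  A^T = - A -> \tr (V^T *m (A *m V)) = 0.
Proof.
move=> hA.
have h : \tr (V^T *m (A *m V)) = - \tr (V^T *m (A *m V)).
  rewrite -{1}mxtrace_tr !trmx_mul trmxK hA mulmxN mulNmx.
  by rewrite -mulmxA raddfN.
have : 2 * \tr (V^T *m (A *m V)) = 0 by rewrite mulr2n mulrDl mul1r {1}h addNr.
by move/eqP; rewrite mulf_eq0 pnatr_eq0 orFb => /eqP.
Qed.

Lemma skew_unit (n : nat) (A : 'M[R]_n) : A^T = - A -> (1%:M - A) \in unitmx.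
Proof.
move=> hA; rewrite -row_free_unit -kermx_eq0; apply/eqP.
set K := kermx (1%:M - A).
have hK : K *m (1%:M - A) = 0 := mulmx_ker _.
have e : K = K *m A.
  by apply/eqP; rewrite -subr_eq0 -{1}(mulmx1 K) -mulmxBr hK.
have hA' : A^T^T = - A^T by rewrite trmxK hA opprK.
have : \tr ((K^T)^T *m K^T) = 0.
  by rewrite trmxK {1}e -mulmxA -{1}(trmxK K) tr_skew.
by move/ip_eq0/(congr1 trmx); rewrite trmxK trmx0.
Qed.

(* Cayley: Y = invmx (1 - A), Kc = 2Y - 1 is orthogonal *)
Lemma cayley_orth (n : nat) (A : 'M[R]_n) : A^T = - A ->
  let Y := invmx (1%:M - A) in
  (2%:R *: Y - 1%:M)^T *m (2%:R *: Y - 1%:M) = 1%:M.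
Proof.
move=> hA Y.
have uB := skew_unit hA.
set B := 1%:M - A.
have BY : B *m Y = 1%:M by rewrite mulmxV.
have YB : Y *m B = 1%:M by rewrite mulVmx.
have BT : B^T = 2%:R *: 1%:M - B.
  rewrite /B trB trmx1 hA; apply/matrixP => i j; rewrite !mxE; lra.
have YtBt : Y^T *m B^T = 1%:M by rewrite -trmx_mul BY trmx1.
have key : Y^T + Y = 2%:R *: (Y^T *m Y).
  have e1 : Y^T *m (B + B^T) *m Y = Y^T + Y.
    by rewrite mulmxDr mulmxDl -mulmxA BY mulmx1 YtBt mul1mx.
  by rewrite -e1 BT addrC subrK -scalemxAr mulmx1 scalemxAl.
rewrite trB trZ trmx1 mulmxBl mulmxBr mulmxBr !mulmx1 !mul1mx.
rewrite -!scalemxAl -!scalemxAr scalerA.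
have -> : (2%:R * 2%:R : R) *: (Y^T *m Y) = 2%:R *: (Y^T + Y).
  by rewrite key scalerA.
rewrite scalerDr; apply/matrixP => i j; rewrite !mxE; lra.
Qed.

Lemma cayley_exp (n : nat) (A : 'M[R]_n) : A^T = - A ->
  let Y := invmx (1%:M - A) in
  2%:R *: Y - 1%:M = 1%:M + 2%:R *: A + 2%:R *: (Y *m (A *m A)).
Proof.
move=> hA Y.
have uB := skew_unit hA.
have YB : Y *m (1%:M - A) = 1%:M by rewrite mulVmx.
have e : Y = 1%:M + A + Y *m (A *m A).
  have : Y *m (1%:M - A *m A) = 1%:M + A.
    have -> : 1%:M - A *m A = (1%:M - A) *m (1%:M + A).
      by rewrite mulmxDr mulmx1 mulmxBl mul1mx addrA subrK.
    by rewrite mulmxA YB mul1mx.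
  rewrite mulmxBr mulmx1 => h.
  by rewrite -h subrK.
rewrite {1}e !scalerDr; apply/matrixP => i j; rewrite !mxE; lra.
Qed.

Lemma cayley_bound (n p : nat) (A : 'M[R]_n) (X : 'M[R]_(n, p)) : A^T = - A ->
  \tr ((invmx (1%:M - A) *m X)^T *m (invmx (1%:M - A) *m X)) <= \tr (X^T *m X).
Proof.
move=> hA; set V := invmx (1%:M - A) *m X.
have uB := skew_unit hA.
have BV : (1%:M - A) *m V = X by rewrite /V mulmxA mulmxV // mul1mx.
have e : \tr (V^T *m X) = \tr (V^T *m V).
  by rewrite -BV mulmxBl mul1mx mulmxBr mxtraceD raddfN /= tr_skew // subr0.
have := ip_le V X; rewrite e; lra.
Qed.

End IP.

Section Descent.
Variable R : realFieldType.

Definition l1n (p q : nat) (W : 'M[R]_(p, q)) : R := \sum_i \sum_k `|W i k|.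

Definition phie (w e : R) : R := if w == 0 then `|e| else Num.sg w * e.

Definition phi (p q : nat) (W E : 'M[R]_(p, q)) : R :=
  \sum_i \sum_k phie (W i k) (E i k).

Lemma abs_step (w e t : R) : 0 <= t -> (w != 0 -> t * `|e| <= `|w|) ->
  `|w + t * e| <= `|w| + t * phie w e.
Proof.
move=> t0 h; rewrite /phie; case: eqP => [->|/eqP nz].
  by rewrite add0r normr0 add0r normrM ger0_norm.
have h1 := h nz.
have h2 : - (t * `|e|) <= t * e <= t * `|e|.
  have e1 : e <= `|e| := ler_norm e.
  have e2 : - e <= `|e| by rewrite -normrN ler_norm.
  have := ler_wpM2l t0 e1; have := ler_wpM2l t0 e2; rewrite mulrN.
  move=> a b; apply/andP; split; lra.
case: (ltgtP w 0) => [wn|wp|/eqP]; last by rewrite (negbTE nz).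
- move/andP: h2 => [h3 h4]; rewrite (ltr0_norm wn) in h1.
  rewrite ltr0_sg // mulN1r (ltr0_norm wn) ler0_norm; last by lra.
  lra.
- move/andP: h2 => [h3 h4]; rewrite (gtr0_norm wp) in h1.
  rewrite gtr0_sg // mul1r (gtr0_norm wp) ger0_norm; last by lra.
  lra.
Qed.

Lemma le_sum1 (I : finType) (F : I -> R) i : (forall j, 0 <= F j) -> F i <= \sum_j F j.
Proof. by move=> h; rewrite (bigD1 i) //= lerDl; apply: sumr_ge0. Qed.

Lemma abs_le_sq (a : R) : `|a| <= 1 + a ^+ 2.
Proof.
have := sqr_ge0 (`|a| - 1); rewrite sqrrB real_normK ?num_real //.
have := normr_ge0 a; lra.
Qed.


Lemma le_sum3 (J : nat) (n : 'I_J -> nat) (l : nat) (F : forall j, 'I_(n j) -> 'I_l -> R) j i k :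
  (forall j i k, 0 <= F j i k) -> F j i k <= \sum_j \sum_i \sum_k F j i k.
Proof.
move=> h.
have h1 : \sum_i \sum_k F j i k <= \sum_j \sum_i \sum_k F j i k.
  apply: (@le_sum1 _ (fun j => \sum_i \sum_k F j i k) j).
  by move=> j'; apply: sumr_ge0 => i' _; apply: sumr_ge0 => k' _.
have h2 : \sum_k F j i k <= \sum_i \sum_k F j i k.
  apply: (@le_sum1 _ (fun i => \sum_k F j i k) i).
  by move=> i'; apply: sumr_ge0 => k' _.
have h3 : F j i k <= \sum_k F j i k by apply: le_sum1.
exact: (le_trans h3 (le_trans h2 h1)).
Qed.

Lemma le_sum2 (m l : nat) (F : 'I_m -> 'I_l -> R) i k :
  (forall i k, 0 <= F i k) -> F i k <= \sum_i \sum_k F i k.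
Proof.
move=> h.
have h2 : \sum_k F i k <= \sum_i \sum_k F i k.
  apply: (@le_sum1 _ (fun i => \sum_k F i k) i).
  by move=> i'; apply: sumr_ge0 => k' _.
have h3 : F i k <= \sum_k F i k by apply: le_sum1.
exact: (le_trans h3 h2).
Qed.

Lemma mulmx_entry_bound (p q s : nat) (M : 'M[R]_(p, q)) (V : 'M[R]_(q, s)) c i k :
  (forall a b, `|V a b| <= c) -> `|(M *m V) i k| <= c * \sum_a `|M i a|.
Proof.
move=> h; rewrite mxE mulr_sumr.
apply: (le_trans (ler_norm_sum _ _ _)); apply: ler_sum => a _.
rewrite normrM mulrC; apply: ler_wpM2r => //.
Qed.

Lemma ent3 (p q : nat) (A B M : 'M[R]_(p, q)) a b i k :
  (A + a *: B + b *: M) i k = A i k + a * B i k + b * M i k.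
Proof. by rewrite !mxE. Qed.

Lemma sub3 (a b c : R) : a + b + c - a = b + c.
Proof. by rewrite addrAC (addrAC a) subrr add0r. Qed.

Lemma descent (J m l : nat) (n r : 'I_J -> nat)
  (P : forall j, 'M[R]_(n j, r j)) (C : forall j, 'M[R]_(r j, m))
  (hP : forall j, (P j)^T *m P j = 1%:M)
  (Ws : forall j, 'M[R]_(n j, l)) (Zs : 'M[R]_(m, l)) (eps : R) :
  0 < eps ->
  (forall j, (P j)^T *m Ws j = C j *m Zs) -> Zs^T *m Zs = 1%:M ->
  (forall (W : forall j, 'M[R]_(n j, l)) (Z : 'M[R]_(m, l)),
     (forall j, (P j)^T *m W j = C j *m Z) -> Z^T *m Z = 1%:M ->
     (forall j i k, `|W j i k - Ws j i k| < eps) ->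
     (forall i k, `|Z i k - Zs i k| < eps) ->
     \sum_j l1n (Ws j) <= \sum_j l1n (W j)) ->
  forall (D : 'M[R]_(m, l)) (E : forall j, 'M[R]_(n j, l)),
  Zs^T *m D = 0 -> (forall j, (P j)^T *m E j = C j *m D) ->
  0 <= \sum_j phi (Ws j) (E j).
Proof.
move=> eps0 hWs hZs hopt D E hD hE.
rewrite leNgt; apply/negP => hneg.
set delta := - \sum_j phi (Ws j) (E j).
have delta0 : 0 < delta by rewrite /delta oppr_gt0.
set Om := D *m Zs^T - Zs *m D^T.
have hOm : Om^T = - Om.
  by rewrite /Om trB !trmx_mul !trmxK opprB.
have hDt : D^T *m Zs = 0 by rewrite -(trmxK Zs) -trmx_mul hD trmx0.
have hOZ : Om *m Zs = D.
  by rewrite /Om mulmxBl -!mulmxA hZs hDt mulmx1 mulmx0 subr0.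
set X := Om *m Om *m Zs.
set c := 1 + \tr (X^T *m X).
pose A (t : R) := (t / 2) *: Om.
have hA t : (A t)^T = - A t by rewrite /A trZ hOm scalerN.
pose Y t := invmx (1%:M - A t).
pose V t := Y t *m X.
have hV t a b : `|V t a b| <= c.
  apply: (le_trans (abs_le_sq _)); rewrite lerD2l.
  apply: (le_trans (ip_entry _ a b)); exact: cayley_bound.
pose Zt t := (2%:R *: Y t - 1%:M) *m Zs.
have hZt t : Zt t = Zs + t *: D + (t ^+ 2 / 2) *: V t.
  have e1 : A t *m Zs = (t / 2) *: D by rewrite /A -(scalemxAl (t / 2) Om) hOZ.
  have e2 : A t *m A t = ((t / 2) * (t / 2)) *: (Om *m Om).
    by rewrite /A -(scalemxAl (t / 2) Om) -(scalemxAr (t / 2) Om Om) scalerA.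
  rewrite /Zt cayley_exp // mulmxDl mulmxDl mul1mx -/(A t) -/(Y t).
  rewrite -(scalemxAl 2%:R (A t)) e1 e2 -(scalemxAr _ (Y t)).
  rewrite -(scalemxAl 2%:R) -(scalemxAl _ (Y t *m (Om *m Om))) !scalerA /V /X !mulmxA.
  by congr (_ + _ *: _ + _ *: _); field.
have hZtorth t : (Zt t)^T *m Zt t = 1%:M.
  rewrite /Zt trmx_mul mulmxA -(mulmxA Zs^T) cayley_orth // mulmx1 //.
pose Wt t j := Ws j + t *: E j + (t ^+ 2 / 2) *: (P j *m C j *m V t).
have hWt t j : (P j)^T *m Wt t j = C j *m Zt t.
  by rewrite /Wt hZt !mulmxDr -!scalemxAr hWs hE !mulmxA hP mul1mx.
pose PC j := P j *m C j.
set K := 1 + c + \sum_i \sum_k `|D i k| +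
  \sum_j \sum_i \sum_k (`|E j i k| + c * \sum_a `|PC j i a|).
set S := \sum_j \sum_i \sum_k
  (if Ws j i k == 0 then 0 else `|E j i k| / `|Ws j i k|).
set N0 := \sum_j \sum_(i < n j) \sum_(k < l) (1 : R).
have c1 : 1 <= c by rewrite /c lerDl ip_ge0.
have sD : 0 <= \sum_i \sum_k `|D i k|.
  by apply: sumr_ge0 => i _; apply: sumr_ge0 => k _.
have sE j i k : 0 <= `|E j i k| + c * \sum_a `|PC j i a|.
  apply: addr_ge0 => //; apply: mulr_ge0; first lra.
  by apply: sumr_ge0.
have sE' : 0 <= \sum_j \sum_i \sum_k (`|E j i k| + c * \sum_a `|PC j i a|).
  by apply: sumr_ge0 => j _; apply: sumr_ge0 => i _; apply: sumr_ge0 => k _.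
have K1 : 1 <= K by rewrite /K; lra.
have KD i k : `|D i k| <= K.
  have := @le_sum2 _ _ (fun i k => `|D i k|) i k (fun _ _ => normr_ge0 _); rewrite /K; lra.
have KE j i k : `|E j i k| + c * \sum_a `|PC j i a| <= K.
  have := @le_sum3 _ _ _ (fun j i k => `|E j i k| + c * \sum_a `|PC j i a|) j i k sE.
  rewrite /K; lra.
have Kc : c <= K by rewrite /K; lra.
have S0 : 0 <= S.
  apply: sumr_ge0 => j _; apply: sumr_ge0 => i _; apply: sumr_ge0 => k _.
  by case: eqP => // _; apply: divr_ge0.
have SS j i k : Ws j i k != 0 -> `|E j i k| / `|Ws j i k| <= S.
  move=> nz.
  have := @le_sum3 _ _ _ (fun j i k => if Ws j i k == 0 then 0 else `|E j i k| / `|Ws j i k|) j i k.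
  rewrite /= (negbTE nz); apply => j' i' k'.
  by case: eqP => // _; apply: divr_ge0.
have N00 : 0 <= N0.
  by apply: sumr_ge0 => j _; apply: sumr_ge0 => i _; apply: sumr_ge0 => k _.
clearbody K S.
set den := 1 + S + 2 * K / eps + K * N0 / delta.
have a1 : 0 <= 2 * K / eps by apply: divr_ge0 => //; lra.
have a2 : 0 <= K * N0 / delta by apply: divr_ge0; [apply: mulr_ge0; lra|lra].
have den0 : 0 < den by rewrite /den; lra.
set t := den^-1.
have t0 : 0 < t by rewrite invr_gt0.
have tden : t * den = 1 by rewrite mulVf // gt_eqF.
have tb1 : 0 <= t * S by apply: mulr_ge0 => //; lra.
have tb2 : 0 <= t * (2 * K / eps) by apply: mulr_ge0 => //; lra.
have tb3 : 0 <= t * (K * N0 / delta) by apply: mulr_ge0 => //; lra.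

have tden' : t + t * S + t * (2 * K / eps) + t * (K * N0 / delta) = 1.
  have e : t * den = t + t * S + t * (2 * K / eps) + t * (K * N0 / delta).
    by rewrite /den !mulrDr mulr1.
  by rewrite -e.
have t1 : t <= 1 by lra.
have tS : t * S <= 1 - t by lra.
have tK : 2 * K * t < eps.
  have h : t * (2 * K / eps) < 1 by lra.
  have e : t * (2 * K / eps) = 2 * K * t / eps by rewrite mulrC mulrAC.
  by rewrite -[eps]mul1r -ltr_pdivrMr // -e.
have tN : t * K * N0 < delta.
  have h : t * (K * N0 / delta) < 1 by lra.
  have e : t * (K * N0 / delta) = t * K * N0 / delta by rewrite !mulrA.
  by rewrite -[delta]mul1r -ltr_pdivrMr // -e.
have u0 : 0 <= t ^+ 2 / 2 by apply: divr_ge0 => //; apply: sqr_ge0.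
have ut : t ^+ 2 / 2 <= t.
  have : t ^+ 2 <= t by rewrite expr2 ger_pMr //.
  have := ltW t0; lra.
have K0 : 0 <= K by lra.
have uK : t ^+ 2 / 2 * K <= t * K by apply: ler_wpM2r.
have hPCV j i k : `|(P j *m C j *m V t) i k| <= K.
  apply: (le_trans (@mulmx_entry_bound _ _ _ (P j *m C j) _ _ i k (hV t))).
  have := KE j i k; have := normr_ge0 (E j i k); rewrite /PC; lra.
have tE j i k : t * `|E j i k| <= t * K.
  apply: ler_wpM2l; first exact: ltW.
  have := KE j i k; have : 0 <= c * \sum_a `|PC j i a|.
    by apply: mulr_ge0; [lra|apply: sumr_ge0].
  lra.
have uP j i k : t ^+ 2 / 2 * `|(P j *m C j *m V t) i k| <= t ^+ 2 / 2 * K.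
  exact: ler_wpM2l.
have hWdev j i k : `|Wt t j i k - Ws j i k| < eps.
  rewrite /Wt ent3 sub3.
  apply: (le_lt_trans (ler_normD _ _)).
  rewrite (normrM t) (normrM (t ^+ 2 / 2)) (ger0_norm (ltW t0)) (ger0_norm u0).
  have := tE j i k; have := uP j i k; lra.
have hZdev i k : `|Zt t i k - Zs i k| < eps.
  rewrite hZt ent3 sub3.
  apply: (le_lt_trans (ler_normD _ _)).
  rewrite (normrM t) (normrM (t ^+ 2 / 2)) (ger0_norm (ltW t0)) (ger0_norm u0).
  have h1 : t * `|D i k| <= t * K by apply: ler_wpM2l; [exact: ltW|exact: KD].
  have h2 : t ^+ 2 / 2 * `|V t i k| <= t ^+ 2 / 2 * K.
    by apply: ler_wpM2l => //; apply: le_trans (hV t i k) Kc.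
  lra.
have hobj := hopt (Wt t) (Zt t) (hWt t) (hZtorth t) hWdev hZdev.
have hent j i k : `|Wt t j i k| <= `|Ws j i k| + t * phie (Ws j i k) (E j i k) + t ^+ 2 / 2 * K.
  rewrite /Wt ent3.
  apply: (le_trans (ler_normD _ _)); rewrite (normrM (t ^+ 2 / 2)) (ger0_norm u0).
  have := uP j i k; suff : `|Ws j i k + t * E j i k| <= `|Ws j i k| + t * phie (Ws j i k) (E j i k) by lra.
  apply: abs_step; first exact: ltW.
  move=> nz; have h := SS j i k nz.
  have h2 : t * (`|E j i k| / `|Ws j i k|) <= 1.
    have : t * (`|E j i k| / `|Ws j i k|) <= t * S by apply: ler_wpM2l => //; exact: ltW.
    lra.
  by move: h2; rewrite mulrA ler_pdivrMr ?normr_gt0 // mul1r.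
have esum : \sum_j \sum_i \sum_k (`|Ws j i k| + t * phie (Ws j i k) (E j i k) + t ^+ 2 / 2 * K)
    = \sum_j l1n (Ws j) + t * \sum_j phi (Ws j) (E j) + t ^+ 2 / 2 * K * N0.
  rewrite /l1n /phi /N0 !mulr_sumr -!big_split; apply: eq_bigr => j _.
  rewrite !mulr_sumr -!big_split; apply: eq_bigr => i _.
  rewrite !mulr_sumr -!big_split; apply: eq_bigr => k _.
  by rewrite mulr1.
have hle : \sum_j l1n (Wt t j) <= \sum_j l1n (Ws j) + t * \sum_j phi (Ws j) (E j) + t ^+ 2 / 2 * K * N0.
  rewrite -esum; apply: ler_sum => j _; apply: ler_sum => i _; apply: ler_sum => k _.
  exact: hent.
have hq : t ^+ 2 / 2 * K * N0 < t * delta.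
  have h1 : t * (t * K * N0) < t * delta by rewrite ltr_pM2l.
  have h2 : 0 <= t * (t * K * N0) by apply: mulr_ge0 (ltW t0) (mulr_ge0 (mulr_ge0 (ltW t0) K0) N00).
  have e : t ^+ 2 / 2 * K * N0 = t * (t * K * N0) / 2 by rewrite expr2; field.
  rewrite e; lra.
have : t * delta = - (t * \sum_j phi (Ws j) (E j)) by rewrite /delta mulrN.
lra.
Qed.

End Descent.

Section Sep.
Variable R : realType.

Lemma sep (N : nat) (q : 'rV[R]_N -> 'rV[R]_N -> R) :
  (forall x y, q x y = q y x) ->
  (forall t x x' y, q ((1 - t) *: x + t *: x') y = (1 - t) * q x y + t * q x' y) ->
  (forall x, 0 <= q x x) ->
  continuous (fun x => q x x) ->
  (forall x0 : 'rV[R]_N, (forall i, -1 <= x0 0 i <= 1) ->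
     exists2 x : 'rV[R]_N, (forall i, -1 <= x 0 i <= 1) & q x x0 <= 0) ->
  exists2 x : 'rV[R]_N, (forall i, -1 <= x 0 i <= 1) & q x x = 0.
Proof.
move=> qsym qaff qpos qcont hyp.
pose B := [set v : 'rV[R]_N | forall i, `[(-1 : R), 1]%classic (v ord0 i)]%classic.
have Bc : compact B.
  by apply: (@rV_compact _ _ (fun _ => `[(-1 : R), 1]%classic)) => _; apply: segment_compact.
have Bn : (B !=set0)%classic.
  by exists 0 => i /=; rewrite mxE in_itv /=; apply/andP; split; lra.
have inB x : (x \in B) <-> (forall i, -1 <= x 0 i <= 1).
  rewrite inE; split => h i; have := h i => /=; rewrite in_itv //=.
have [x0 x0B x0min] := compact_EVT_min Bn Bc (@continuous_subspaceT _ _ B _ qcont).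
have /inB x0B' := x0B.
have [x xB hb] := hyp x0 x0B'.
exists x0 => //.
set a := q x0 x0; set b := q x x0; set c := q x x.
have a0 : 0 <= a by apply: qpos.
have c0 : 0 <= c by apply: qpos.
have [->//|an0] := eqVneq a 0.
have apos : 0 < a by rewrite lt0r an0 a0.
exfalso.
pose t := a / (a + c).
have ac0 : 0 < a + c by lra.
have t0 : 0 < t by apply: divr_gt0.
have t1 : t <= 1 by rewrite /t ler_pdivrMr // mul1r; lra.
have tac : t * (a + c) = a by rewrite /t mulfVK // gt_eqF.
pose xt := (1 - t) *: x0 + t *: x.
have xtB : xt \in B.
  apply/inB => i; rewrite /xt !mxE.
  have /andP [h1 h2] := x0B' i; have /andP [h3 h4] := xB i.
  have e1 : (1 - t) * x0 0 i <= (1 - t) * 1 by apply: ler_wpM2l; lra.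
  have e2 : t * x 0 i <= t * 1 by apply: ler_wpM2l; lra.
  have e3 : (1 - t) * (-1) <= (1 - t) * x0 0 i by apply: ler_wpM2l; lra.
  have e4 : t * (-1) <= t * x 0 i by apply: ler_wpM2l; lra.
  apply/andP; split; lra.
have hmin := x0min _ xtB; rewrite /= -/a in hmin.
have e0 : q x0 x = b by rewrite qsym.
have E1 : q xt xt = (1 - t) * ((1 - t) * a + t * b) + t * ((1 - t) * b + t * c).
  have E1a : q xt x0 = (1 - t) * a + t * b by rewrite /xt qaff.
  have E1b : q xt x = (1 - t) * b + t * c by rewrite /xt qaff e0.
  by rewrite {1}/xt qaff (qsym x0) (qsym x) E1a E1b.
have E2 : (1 - t) * ((1 - t) * a + t * b) + t * ((1 - t) * b + t * c)
   = a - 2 * t * a + t * (t * (a + c)) + 2 * (t * (1 - t)) * b.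
  ring.
rewrite E1 E2 tac in hmin.
have tb : t * (1 - t) * b <= 0.
  apply: mulr_ge0_le0 => //; apply: mulr_ge0; lra.
have ta : 0 < t * a by apply: mulr_gt0.
lra.
Qed.

End Sep.

Section Cont.
Variable R : realType.
Variable N : nat.
Local Notation V := 'rV[R]_N.

Lemma cont_sum (I : Type) (r : seq I) (P : pred I) (F : I -> V -> R) :
  (forall a, continuous (F a)) -> continuous (fun x => \sum_(a <- r | P a) F a x).
Proof.
move=> h; elim: r => [|a r IH].
  have -> : (fun x : V => \sum_(a <- [::] | P a) F a x) = (fun=> 0).
    by apply: funext => x; rewrite big_nil.
  exact: cst_continuous.
case Pa: (P a).
  have -> : (fun x : V => \sum_(b <- a :: r | P b) F b x) =
     (F a) + (fun x => \sum_(b <- r | P b) F b x).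
    by apply: funext => x; rewrite big_cons Pa.
  by move=> x; apply: continuousD; [exact: h|exact: IH].
have -> : (fun x : V => \sum_(b <- a :: r | P b) F b x) =
     (fun x => \sum_(b <- r | P b) F b x).
  by apply: funext => x; rewrite big_cons Pa.
exact: IH.
Qed.

Lemma cont_mul (f g : V -> R) : continuous f -> continuous g ->
  continuous (fun x => f x * g x).
Proof. by move=> hf hg x; apply: continuousM; [exact: hf|exact: hg]. Qed.

Definition ecP (p q : nat) (f : V -> 'M[R]_(p, q)) :=
  forall i k, continuous (fun x => f x i k).

Lemma ec_mul (p q s : nat) (K : 'M[R]_(p, q)) (f : V -> 'M[R]_(q, s)) :
  ecP f -> ecP (fun x => K *m f x).
Proof.
move=> h i k.
have -> : (fun x => (K *m f x) i k) = (fun x => \sum_a K i a * f x a k).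
  by apply: funext => x; rewrite mxE.
apply: cont_sum => a; apply: cont_mul => //; exact: cst_continuous.
Qed.

Lemma ec_sum (I : Type) (r : seq I) (p q : nat) (f : I -> V -> 'M[R]_(p, q)) :
  (forall a, ecP (f a)) -> ecP (fun x => \sum_(a <- r) f a x).
Proof.
move=> h i k.
have -> : (fun x => (\sum_(a <- r) f a x) i k) = (fun x => \sum_(a <- r) f a x i k).
  by apply: funext => x; rewrite summxE.
by apply: cont_sum => a; apply: h.
Qed.

Lemma ec_ip (p q : nat) (f : V -> 'M[R]_(p, q)) :
  ecP f -> continuous (fun x => \tr ((f x)^T *m f x)).
Proof.
move=> h.
have -> : (fun x => \tr ((f x)^T *m f x)) = (fun x => \sum_i \sum_k f x i k * f x i k).
  by apply: funext => x; rewrite ipE.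
by apply: cont_sum => i; apply: cont_sum => k; apply: cont_mul; apply: h.
Qed.

End Cont.

Unset Implicit Arguments.

Lemma tr_sum (R : realFieldType) (J p q : nat) (M : 'I_J -> 'M[R]_(p, q)) (D : 'M[R]_(p, q)) :
  \tr ((\sum_j M j)^T *m D) = \sum_j \tr ((M j)^T *m D).
Proof.
rewrite ipE.
have e : forall i k, (\sum_j M j) i k * D i k = \sum_j M j i k * D i k.
  by move=> i k; rewrite summxE mulr_suml.
rewrite (eq_bigr (fun i => \sum_k \sum_j M j i k * D i k)); last first.
  by move=> i _; apply: eq_bigr => k _; exact: e.
rewrite [RHS](eq_bigr (fun j => \sum_i \sum_k M j i k * D i k)); last first.
  by move=> j _; rewrite ipE.
rewrite [RHS]exchange_big /=; apply: eq_bigr => i _.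
by rewrite [RHS]exchange_big.
Qed.

Lemma ip_lin (R : realFieldType) (p q : nat) (M1 M2 N : 'M[R]_(p, q)) a b :
  \tr ((a *: M1 + b *: M2)^T *m N) = a * \tr (M1^T *m N) + b * \tr (M2^T *m N).
Proof.
rewrite !ipE mulr_sumr mulr_sumr -big_split; apply: eq_bigr => i _.
rewrite mulr_sumr mulr_sumr -big_split; apply: eq_bigr => k _.
by rewrite !mxE mulrDl !mulrA.
Qed.

Lemma sg_box (R : realDomainType) (x : R) : -1 <= - Num.sg x <= 1.
Proof.
have : `|Num.sg x| <= 1 by rewrite normr_sg; case: (x != 0).
by rewrite ler_norml => /andP [h1 h2]; apply/andP; split; lra.
Qed.

Lemma subdiff_entry (R : realFieldType) (w g v : R) :
  `|g| <= 1 -> (w != 0 -> g = Num.sg w) -> `|w| + g * (v - w) <= `|v|.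
Proof.
move=> hg hw.
have gv : g * v <= `|v|.
  apply: (le_trans (ler_norm _)); rewrite normrM.
  by apply: (le_trans (ler_wpM2r (normr_ge0 v) hg)); rewrite mul1r.
have [w0|nz] := eqVneq w 0.
  by rewrite w0 normr0 subr0 add0r.
rewrite (hw nz) in gv; rewrite mulrBr (hw nz) -normrEsg; lra.
Qed.

Theorem lemma1 (R : realType) (J m l : nat) (n r : 'I_J -> nat)
  (X : forall j, 'M[R]_(n j, m))
  (P : forall j, 'M[R]_(n j, r j)) (Q : forall j, 'M[R]_(m, r j))
  (s : forall j, 'rV[R]_(r j))
  (hP : forall j, (P j)^T *m P j = 1%:M)
  (hQ : forall j, (Q j)^T *m Q j = 1%:M)
  (hs : forall j (i : 'I_(r j)), 0 < s j 0 i)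
  (hX : forall j, X j = P j *m diag_mx (s j) *m (Q j)^T)
  (hl : (0 < l)%N)
  (Ws : forall j, 'M[R]_(n j, l)) (Zs : 'M[R]_(m, l))
  (hmin : local_minimizer (fun j => (P j)^T)
            (fun j => - (invmx (diag_mx (s j)) *m (Q j)^T)) Ws Zs) :
  exists (L1 : forall j, 'M[R]_(r j, l)) (L2 : 'M[R]_l),
    (forall j, subdiff (@l1norm R (n j) l) (Ws j) (((P j)^T)^T *m L1 j)) /\
    \sum_(j < J) (- (invmx (diag_mx (s j)) *m (Q j)^T))^T *m L1 j + Zs *m L2 = 0 /\
    (forall j, (P j)^T *m Ws j + (- (invmx (diag_mx (s j)) *m (Q j)^T)) *m Zs = 0) /\
    Zs^T *m Zs = 1%:M.
Proof.
case: hmin => [[hfeas hZs] [eps [eps0 hopt]]].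
pose C j := invmx (diag_mx (s j)) *m (Q j)^T.
have feasE (W : forall j, 'M[R]_(n j, l)) (Z : 'M[R]_(m, l)) j :
    ((P j)^T *m W j + (- C j) *m Z = 0) <-> ((P j)^T *m W j = C j *m Z).
  rewrite mulNmx; split => [h|->]; last by rewrite subrr.
  by apply/eqP; rewrite -subr_eq0 h.
have hWs j : (P j)^T *m Ws j = C j *m Zs by apply/feasE.
have hdesc := @descent R J m l n r P C hP Ws Zs eps eps0 hWs hZs.
have {}hdesc : forall (D : 'M[R]_(m, l)) (E : forall j, 'M[R]_(n j, l)),
    Zs^T *m D = 0 -> (forall j, (P j)^T *m E j = C j *m D) ->
    0 <= \sum_j phi (Ws j) (E j).
  apply: hdesc => W Z hW hZ hWd hZd.
  by apply: (hopt W Z) => //; split => // j; apply/feasE.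
pose I := {j : 'I_J & ('I_(n j) * 'I_l)%type}.
pose Nn := #|{: I}|.
pose idx j (i : 'I_(n j)) (k : 'I_l) : 'I_Nn :=
  enum_rank (Tagged (fun j => ('I_(n j) * 'I_l)%type) (i, k) : I).
pose G (x : 'rV[R]_Nn) j : 'M[R]_(n j, l) :=
  \matrix_(i, k) (if Ws j i k == 0 then x 0 (idx j i k) else Num.sg (Ws j i k)).
pose Rm j : 'M[R]_(n j) := 1%:M - P j *m (P j)^T.
pose Pi : 'M[R]_m := 1%:M - Zs *m Zs^T.
pose Sx x := \sum_j (C j)^T *m (P j)^T *m G x j.
pose q x y := \sum_j \tr ((Rm j *m G x j)^T *m (Rm j *m G y j)) +
   \tr ((Pi *m Sx x)^T *m (Pi *m Sx y)).
have hG t x x' j : G ((1 - t) *: x + t *: x') j = (1 - t) *: G x j + t *: G x' j.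
  apply/matrixP => i k; rewrite !mxE; case: eqP => _ //.
  by rewrite -mulrDl subrK mul1r.
have qsym x y : q x y = q y x.
  rewrite /q; congr (_ + _); last exact: ip_sym.
  by apply: eq_bigr => j _; exact: ip_sym.
have hRG t x x' j : Rm j *m G ((1 - t) *: x + t *: x') j =
    (1 - t) *: (Rm j *m G x j) + t *: (Rm j *m G x' j).
  by rewrite hG mulmxDr -!scalemxAr.
have hSx t x x' : Sx ((1 - t) *: x + t *: x') = (1 - t) *: Sx x + t *: Sx x'.
  rewrite /Sx !scaler_sumr -big_split; apply: eq_bigr => j _.
  by rewrite hG mulmxDr -!scalemxAr.
have hPS t x x' : Pi *m Sx ((1 - t) *: x + t *: x') =
    (1 - t) *: (Pi *m Sx x) + t *: (Pi *m Sx x').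
  by rewrite hSx mulmxDr -!scalemxAr.
have qaff t x x' y : q ((1 - t) *: x + t *: x') y = (1 - t) * q x y + t * q x' y.
  rewrite /q hPS ip_lin.
  rewrite (eq_bigr (fun j => (1 - t) * \tr ((Rm j *m G x j)^T *m (Rm j *m G y j)) +
       t * \tr ((Rm j *m G x' j)^T *m (Rm j *m G y j)))); last first.
    by move=> j _; rewrite hRG ip_lin.
  rewrite big_split /= -!mulr_sumr !mulrDr.
  by rewrite addrACA.
have qpos x : 0 <= q x x.
  apply: addr_ge0; last exact: ip_ge0.
  by apply: sumr_ge0 => j _; exact: ip_ge0.
have ecG j : ecP (fun x => G x j).
  move=> i k.
  have -> : (fun x => G x j i k) =
      (fun x => if Ws j i k == 0 then x 0 (idx j i k) else Num.sg (Ws j i k)).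
    by apply: funext => x; rewrite mxE.
  case: (Ws j i k == 0); first exact: coord_continuous.
  exact: cst_continuous.
have ecS : ecP Sx.
  by apply: ec_sum => j; apply: ec_mul.
have qcont : continuous (fun x => q x x).
  have -> : (fun x => q x x) =
     (fun x => \sum_j \tr ((Rm j *m G x j)^T *m (Rm j *m G x j))) +
     (fun x => \tr ((Pi *m Sx x)^T *m (Pi *m Sx x))) by [].
  move=> x; apply: continuousD.
    apply: (cont_sum (F := fun j x => \tr ((Rm j *m G x j)^T *m (Rm j *m G x j)))) => j.
    by apply: ec_ip; apply: ec_mul.
  by apply: ec_ip; apply: ec_mul.
have hRmT j : (Rm j)^T = Rm j by rewrite /Rm trB trmx1 trmx_mul trmxK.
have hPiT : Pi^T = Pi by rewrite /Pi trB trmx1 trmx_mul trmxK.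
have hPR j : (P j)^T *m Rm j = 0.
  by rewrite /Rm mulmxBr mulmx1 mulmxA hP mul1mx subrr.
have hZPi : Zs^T *m Pi = 0.
  by rewrite /Pi mulmxBr mulmx1 mulmxA hZs mul1mx subrr.
have hyp : forall x0 : 'rV[R]_Nn, (forall i, -1 <= x0 0 i <= 1) ->
    exists2 x : 'rV[R]_Nn, (forall i, -1 <= x 0 i <= 1) & q x x0 <= 0.
  move=> x0 _.
  pose D := Pi^T *m (Pi *m Sx x0).
  pose dW j := (Rm j)^T *m (Rm j *m G x0 j) + P j *m C j *m D.
  have qE x : q x x0 = \sum_j \tr ((G x j)^T *m dW j).
    rewrite /q.
    have e2 : \tr ((Pi *m Sx x)^T *m (Pi *m Sx x0)) =
        \sum_j \tr ((G x j)^T *m (P j *m C j *m D)).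
      rewrite trmx_mul -mulmxA -/D /Sx tr_sum; apply: eq_bigr => j _.
      by rewrite !trmx_mul !trmxK !mulmxA.
    rewrite e2 -big_split; apply: eq_bigr => j _ /=.
    by rewrite /dW mulmxDr mxtraceD trmx_mul !mulmxA.
  pose x : 'rV[R]_Nn := \row_a (let t := enum_val a in
      - Num.sg (dW (tag t) (tagged t).1 (tagged t).2)).
  exists x.
    by move=> i; rewrite mxE; apply: sg_box.
  have hd := hdesc (- D) (fun j => - dW j).
  have : Zs^T *m (- D) = 0 by rewrite /D hPiT mulmxN !mulmxA hZPi !mul0mx oppr0.
  move/hd => {}hd.
  have : forall j, (P j)^T *m (- dW j) = C j *m (- D).
    move=> j; rewrite /dW !mulmxN mulmxDr hRmT (mulmxA (P j)^T (Rm j)) hPR mul0mx add0r.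
    by rewrite !mulmxA hP mul1mx.
  move/hd => {}hd.
  rewrite qE.
  have e : \sum_j \tr ((G x j)^T *m dW j) = - \sum_j phi (Ws j) (- dW j).
    rewrite -sumrN; apply: eq_bigr => j _.
    rewrite ipE /phi -sumrN; apply: eq_bigr => i _.
    rewrite -sumrN; apply: eq_bigr => k _.
    have Gx : G x j i k = if Ws j i k == 0 then - Num.sg (dW j i k) else Num.sg (Ws j i k).
      by rewrite mxE /x mxE /idx enum_rankK.
    rewrite Gx /phie.
    case: eqP => _.
      by rewrite [(- dW j) i k]mxE normrN normrEsg mulNr.
    by rewrite [(- dW j) i k]mxE mulrN opprK.
  rewrite e; lra.
have [x xbox qx0] := sep qsym qaff qpos qcont hyp.
have s1 : 0 <= \sum_j \tr ((Rm j *m G x j)^T *m (Rm j *m G x j)).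
  by apply: sumr_ge0 => j _; exact: ip_ge0.
have s2 := ip_ge0 (Pi *m Sx x).
have z1 : \sum_j \tr ((Rm j *m G x j)^T *m (Rm j *m G x j)) = 0.
  by move: qx0; rewrite /q; lra.
have z2 : \tr ((Pi *m Sx x)^T *m (Pi *m Sx x)) = 0.
  by move: qx0; rewrite /q; lra.
have hR j : Rm j *m G x j = 0.
  apply: ip_eq0.
  exact: (psumr_eq0P (fun j _ => ip_ge0 (Rm j *m G x j)) z1).
have hS : Pi *m Sx x = 0 by apply: ip_eq0.
have eG j : P j *m (P j)^T *m G x j = G x j.
  have := hR j; rewrite /Rm mulmxBl mul1mx => /eqP.
  by rewrite subr_eq0 => /eqP <-.
exists (fun j => (P j)^T *m G x j), (Zs^T *m Sx x).
split.
  move=> j V; rewrite trmxK mulmxA eG /l1norm ipE -big_split /=.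
  apply: ler_sum => i _; rewrite -big_split /=; apply: ler_sum => k _.
  rewrite [(V - Ws j) i k]mxE [(- Ws j) i k]mxE; apply: subdiff_entry.
    rewrite mxE; case: eqP => _.
      by have := xbox (idx j i k); rewrite ler_norml.
    by rewrite normr_sg; case: (_ != 0).
  by move=> nz; rewrite mxE (negbTE nz).
split.
  have e1 : \sum_j (- (invmx (diag_mx (s j)) *m (Q j)^T))^T *m ((P j)^T *m G x j) = - Sx x.
    rewrite /Sx -sumrN; apply: eq_bigr => j _.
    by rewrite trN mulNmx !mulmxA.
  rewrite e1 mulmxA.
  have : Pi *m Sx x = Sx x - Zs *m Zs^T *m Sx x by rewrite /Pi mulmxBl mul1mx.
  rewrite hS => /eqP; rewrite eq_sym subr_eq0 => /eqP <-.
  by rewrite addNr.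
split => //.
Qed.
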